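(* There is a universal constant $C$ such that for every prime $p$, every positive integer $k$, every $\epsilon\in(0,1)$, and every $g\in\mathbb{Z}_p$, there is a $k$-party, one-round protocol using public randomness for the Sum-Equal problem over $\mathbb{Z}_p$ relative to $g$, with error at most $\epsilon$ and total communication complexity at most $k\log(k/\epsilon)+C\cdot k$.
   Context: Model: parties $P_1,\dots,P_k$ each hold an input $x_i\in\mathbb{Z}_p$; a coordinator (distinct from the parties) wants to compute $f(x_1,\dots,x_k)$. In a one-round protocol with public randomness, a random string $r$ is shared by all parties and the coordinator; each party sends a single message, depending only on its own input and $r$, to the coordinator, who outputs a value depending only on the received messages and $r$; there is no other communication. The protocol has error at most $\epsilon$ if for every input $(x_1,\dots,x_k)$ the probability over $r$ that the output differs from $f(x_1,\dots,x_k)$ is at most $\epsilon$. Total communication complexity is the maximum total number of bits sent by all parties. Sum-Equal relative to $g$: $f(x_1,\dots,x_k)=1$ if $\sum_i x_i\equiv g\pmod p$ and $0$ otherwise. $\log$ is base 2. *)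

(* Defs.v *)
From HB Require Import structures.
From mathcomp Require Import all_boot all_order all_algebra.
From mathcomp Require Import reals exp.
Set Implicit Arguments. Unset Strict Implicit. Unset Printing Implicit Defensive.
Import Order.TTheory GRing.Theory Num.Theory.
Local Open Scope ring_scope.

(* Party i sends msg i x_i r (a bit string depending only
   on its own input and r); the coordinator outputs out m r where m i is the
   message received from party i. *)
Record protocol (p k : nat) (Rnd : finType) := Protocol {
  msg : 'I_k -> 'Z_p -> Rnd -> seq bool;
  out : ('I_k -> seq bool) -> Rnd -> bool }.

Definition run (p k : nat) (Rnd : finType) (P : protocol p k Rnd)
  (x : 'I_k -> 'Z_p) (r : Rnd) : bool :=
  out P (fun i => msg P i (x i) r) r.

Definition sum_equal (p k : nat) (g : 'Z_p) (x : 'I_k -> 'Z_p) : bool :=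
  (\sum_(i < k) x i) == g.

Definition error_prob {R : realType} (p k : nat) (Rnd : finType)
  (P : protocol p k Rnd) (f : ('I_k -> 'Z_p) -> bool) (x : 'I_k -> 'Z_p) : R :=
  #|[set r : Rnd | run P x r != f x]|%:R / #|Rnd|%:R.

Definition error_at_most {R : realType} (p k : nat) (Rnd : finType)
  (P : protocol p k Rnd) (f : ('I_k -> 'Z_p) -> bool) (eps : R) : Prop :=
  (0 < #|Rnd|)%N /\ forall x : 'I_k -> 'Z_p, error_prob P f x <= eps.

Definition total_comm_at_most {R : realType} (p k : nat) (Rnd : finType)
  (P : protocol p k Rnd) (b : R) : Prop :=
  forall (x : 'I_k -> 'Z_p) (r : Rnd),
    ((\sum_(i < k) size (msg P i (x i) r))%:R : R) <= b.

Definition log2 (R : realType) (x : R) : R := ln x / ln 2.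

(* Main.v *)
Require Import Defs.
From HB Require Import structures.
From mathcomp Require Import all_boot all_order all_algebra.
From mathcomp Require Import reals exp.
From mathcomp Require Import zify lra.
Import Order.TTheory GRing.Theory Num.Theory.
Set Implicit Arguments. Unset Strict Implicit. Unset Printing Implicit Defensive.

Fixpoint enc (b q : nat) : seq bool :=
  if b is b'.+1 then odd q :: enc b' q./2 else [::].
Fixpoint dec (s : seq bool) : nat :=
  if s is c :: s' then c + (dec s').*2 else 0.

Lemma size_enc b q : size (enc b q) = b.
Proof. by elim: b q => //= b IH q; rewrite IH. Qed.

Lemma dec_enc b q : q < 2 ^ b -> dec (enc b q) = q.
Proof.
elim: b q => [|b IH] q /=; first by case: q.
move=> hq; rewrite IH; first by rewrite odd_double_half.
move: hq; rewrite expnS => hq.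
have := odd_double_half q; lia.
Qed.

Lemma count_inj (T : finType) (A : {set T}) (h : T -> nat) m :
  {in A &, injective h} -> (forall r, r \in A -> 0 < h r <= m) -> #|A| <= m.
Proof.
move=> hi hb.
pose h' r : 'I_m.+1 := inord (h r).
have hi' : {in A &, injective h'}.
  move=> r s rA sA /(congr1 (@nat_of_ord _)); rewrite /h' !inordK; last 2 first.
  - by have := hb _ sA; lia.
  - by have := hb _ rA; lia.
  by apply: hi.
rewrite -(card_in_imset hi').
have e : #|~: [set (ord0 : 'I_m.+1)]| = m by rewrite cardsC1 card_ord.
rewrite -[X in _ <= X]e.
apply: subset_leq_card; apply/subsetP => z /imsetP [r rA ->].
rewrite !inE; apply/eqP => /(congr1 (@nat_of_ord _)); rewrite /h' inordK /=;
  have := hb _ rA; lia.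
Qed.

Lemma Zp_lt (p : nat) (z : 'Z_p) : 1 < p -> (z : nat) < p.
Proof. by move=> p1; case: z => z /=; rewrite Zp_cast. Qed.

Lemma sumeq (p k : nat) (g : 'Z_p) (x : 'I_k -> 'Z_p) : 1 < p ->
  sum_equal g x = (p %| \sum_(i < k) (x i : nat) + (p - g)).
Proof.
move=> p1; rewrite /sum_equal.
have -> : (\sum_(i < k) x i = (\sum_(i < k) (x i : nat))%:R)%R.
  by rewrite natr_sum; apply: eq_bigr => i _; rewrite natr_Zp.
have hg := Zp_lt g p1.
apply/eqP/idP.
  move=> /(congr1 (@nat_of_ord _)); rewrite val_Zp_nat // => e.
  rewrite /dvdn -modnDml e; apply/eqP; rewrite subnKC ?modnn //; lia.
move=> hd; apply: val_inj; rewrite /= val_Zp_nat //.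
move: hd; rewrite /dvdn -modnDml.
have := ltn_pmod (\sum_(i < k) (x i : nat)) (ltnW p1).
set u := _ %% p => hu.
clearbody u; move: hu hg p1; move: (nat_of_ord g) => gg. move=> hu hg p1 hd.
have {hd} : p %| u + (p - gg) by rewrite /dvdn.
case: (leqP gg u) => h.
  have -> : u + (p - gg) = (u - gg) + p by lia.
  have hs : u - gg < p by lia.
  rewrite (dvdn_addl _ (dvdnn p)) /dvdn (modn_small hs).
  move/eqP; lia.
move/dvdn_leq; have : 0 < u + (p - gg) by lia.
move=> q /(_ q); lia.
Qed.

Lemma num2 (p M k Q S : nat) : 0 < p -> p %| S -> Q * p <= S * M ->
  S * M + k <= (Q + k) * p -> 0 < k -> Q <= (S %/ p) * M < Q + k.
Proof.
move=> p0 /divnK eS h1 h2 k0.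
rewrite -eS -mulnA [p * M]mulnC mulnA in h1 h2.
apply/andP; split; first by rewrite -(leq_pmul2r p0).
by rewrite -(ltn_pmul2r p0); lia.
Qed.

Lemma num1 (p M k Q S j : nat) : 0 < p -> Q * p <= S * M ->
  S * M + k <= (Q + k) * p -> Q <= j * M < Q + k ->
  (S %% p) * M < k * p \/ (p - S %% p) * M < k * p.
Proof.
move=> p0 h1 h2 /andP [hj1 hj2].
have e := divn_eq S p.
set s := S %/ p in e; set z := S %% p in e *.
have zp : z < p by rewrite ltn_pmod.
have h3 : Q * p <= j * p * M by rewrite mulnAC leq_mul2r hj1 orbT.
have h4 : j * p * M < (Q + k) * p by rewrite mulnAC ltn_pmul2r.
rewrite mulnDl in h2 h4.
case: (leqP j s) => hjs.
  left.
  have hz : z <= S - j * p.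
    have : j * p <= s * p by rewrite leq_mul2r hjs orbT.
    have := e; move: (j * p) (s * p) => a c; lia.
  have := leq_mul2r M z (S - j * p); rewrite hz orbT mulnBl.
  move: (z * M) (S * M) (j * p * M) (Q * p) (k * p) h1 h2 h3 h4 => a c d f h; lia.
right.
have hz : p - z <= j * p - S.
  have : s.+1 * p <= j * p by rewrite leq_mul2r hjs orbT.
  rewrite mulSn; have := e; move: (j * p) (s * p) => a c; lia.
have := leq_mul2r M (p - z) (j * p - S); rewrite hz orbT (mulnBl (j * p) S M).
move: ((p - z) * M) (S * M) (j * p * M) (Q * p) (k * p) h1 h2 h3 h4 => a c d f h; lia.
Qed.

Definition yv (p k : nat) (g : 'Z_p) (a : nat) (i : 'I_k) (xi : 'Z_p) : nat :=
  (a * (xi + (val i == 0) * (p - g))) %% p.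

Definition outf (k b : nat) (m : 'I_k -> seq bool) : bool :=
  let Q := \sum_(i < k) dec (m i) in
  has (fun j => Q <= j * 2 ^ b < Q + k) (iota 0 (Q + k)).
Arguments outf : clear implicits.

Definition proto (p k b : nat) (g : 'Z_p) : protocol p k 'I_p.-1 :=
  Protocol (fun i xi (r : 'I_p.-1) => enc b (yv g r.+1 i xi * 2 ^ b %/ p))
           (fun m _ => outf k b m).

Lemma outfP k b m : 
  reflect (exists j, \sum_(i < k) dec (m i) <= j * 2 ^ b < \sum_(i < k) dec (m i) + k)
          (outf k b m).
Proof.
rewrite /outf; set Q := \sum_(i < k) _.
apply: (iffP hasP) => [[j _ hj]|[j hj]]; first by exists j.
exists j => //; rewrite mem_iota add0n.
have : 0 < 2 ^ b by rewrite expn_gt0.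
have : j <= j * 2 ^ b by rewrite leq_pmulr // expn_gt0.
move: hj; move: (j * 2 ^ b) => c; lia.
Qed.

Lemma sum_first k c : 0 < k -> \sum_(i < k) (val i == 0) * c = c.
Proof.
case: k => // k _; rewrite big_ord_recl /= mul1n big1 ?addn0 //.
Qed.

Lemma S_mod p k (g : 'Z_p) a (x : 'I_k -> 'Z_p) : 0 < k ->
  (\sum_(i < k) yv g a i (x i)) %% p = (a * (\sum_(i < k) (x i : nat) + (p - g))) %% p.
Proof.
move=> k0; rewrite /yv modn_summ -big_distrr /= big_split /= sum_first //.
Qed.

Lemma inj_mul p D (r s : 'I_p.-1) : prime p -> ~~ (p %| D) ->
  (r.+1 * D) %% p = (s.+1 * D) %% p -> r = s.
Proof.
move=> pp nD.
wlog rs : r s / r <= s.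
  move=> W e; case: (leqP r s) => h; first exact: W.
  by symmetry; apply: W => //; lia.
move=> /eqP; rewrite eq_sym eqn_mod_dvd; last by rewrite leq_mul2r ltnS rs orbT.
rewrite -mulnBl Euclid_dvdM // (negbTE nD) orbF.
have hs : s.+1 - r.+1 < p.
  have := ltn_ord s; have := prime_gt1 pp; lia.
rewrite /dvdn modn_small // => /eqP h.
apply: val_inj => /=; lia.
Qed.

Lemma h1_pos p D (r : 'I_p.-1) : prime p -> ~~ (p %| D) -> 0 < (r.+1 * D) %% p.
Proof.
move=> pp nD; rewrite lt0n; apply/negP => /eqP h.
have : p %| r.+1 * D by rewrite /dvdn h.
rewrite Euclid_dvdM // (negbTE nD) orbF => /(dvdn_leq (ltn0Sn _)).
have := ltn_ord r; have := prime_gt1 pp; lia.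
Qed.

Lemma core p k b (g : 'Z_p) (x : 'I_k -> 'Z_p) : prime p -> 0 < k ->
  #|[set r | run (@proto p k b g) x r != sum_equal g x]| <= 2 * (k * p %/ 2 ^ b).
Proof.
move=> pp k0; have p1 := prime_gt1 pp; have p0 := ltnW p1.
have M0 : 0 < 2 ^ b by rewrite expn_gt0.
move: M0; set M := 2 ^ b => M0.
set D := \sum_(i < k) (x i : nat) + (p - g).
rewrite sumeq //.
pose S (r : 'I_p.-1) := \sum_(i < k) yv g r.+1 i (x i).
pose Q (r : 'I_p.-1) := \sum_(i < k) (yv g r.+1 i (x i) * M %/ p).
have hrun r : run (@proto p k b g) x r <-> (exists j, Q r <= j * M < Q r + k).
  have -> : Q r = \sum_(i < k) dec (msg (@proto p k b g) i (x i) r).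
    apply: eq_bigr => i _ /=; rewrite dec_enc // ltn_divLR // mulnC ltn_pmul2l //.
    by rewrite /yv ltn_pmod.
  by split => [/outfP //|h]; apply/outfP.
have hb1 r : Q r * p <= S r * M.
  by rewrite !big_distrl /=; apply: leq_sum => i _; apply: leq_divM.
have hb2 r : S r * M + k <= (Q r + k) * p.
  have e1 : S r * M + k = \sum_(i < k) (yv g r.+1 i (x i) * M).+1.
    by rewrite big_distrl /= -[X in _ + X]card_ord -sum1_card -big_split /=; 
       apply: eq_bigr => i _; rewrite addn1.
  have e2 : (Q r + k) * p = \sum_(i < k) ((yv g r.+1 i (x i) * M %/ p).+1 * p).
    rewrite mulnDl big_distrl /= -[X in _ + X * p]card_ord -sum_nat_const -big_split /=.
    by apply: eq_bigr => i _; rewrite mulSn addnC.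
  rewrite e1 e2; apply: leq_sum => i _; exact: ltn_ceil.
have hS r : S r %% p = (r.+1 * D) %% p by rewrite /S S_mod.
case hD : (p %| D).
  apply: leq_trans (_ : _ <= 0) _ => //; rewrite leqn0 cards_eq0; apply/eqP/setP => r.
  rewrite !inE; apply/negbTE; rewrite negbK; apply/eqP.
  have hSd : p %| S r by rewrite /dvdn hS -modnMmr (eqP hD) muln0 mod0n.
  have := num2 p0 hSd (hb1 r) (hb2 r) k0.
  move=> hj; have : run (@proto p k b g) x r by apply/hrun; exists (S r %/ p).
  by move=> ->.
set m := k * p %/ M.
pose h1 (r : 'I_p.-1) := (r.+1 * D) %% p.
have nD : ~~ (p %| D) by rewrite hD.
set B := [set r | _].
have hB r : r \in B -> h1 r <= m \/ p - h1 r <= m.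
  rewrite inE => hr.
  have : run (@proto p k b g) x r by move: hr; case: (run _ _ _).
  move=> /hrun [j hj].
  have := num1 p0 (hb1 r) (hb2 r) hj; rewrite hS -/(h1 r) /m !leq_divRL //.
  case=> h; [left|right]; lia.
pose B1 := [set r in B | h1 r <= m].
pose B2 := [set r in B | p - h1 r <= m].
have sub : B \subset B1 :|: B2.
  apply/subsetP => r rB; case: (hB r rB) => h; rewrite inE; apply/orP; [left|right];
    by rewrite /B1 /B2 in_set rB h.
apply: leq_trans (subset_leq_card sub) _.
apply: leq_trans (leq_card_setU B1 B2) _.
have hp r : 0 < h1 r < p by rewrite h1_pos // ltn_pmod.
rewrite mul2n -addnn; apply: leq_add.
  apply: (count_inj (h := h1)).
    by move=> r s _ _; apply: (inj_mul pp nD).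
  by move=> r; rewrite inE => /andP [_ ->]; rewrite h1_pos.
apply: (count_inj (h := fun r => p - h1 r)).
  move=> r s _ _ e; apply: (inj_mul pp nD).
  by have := hp r; have := hp s; rewrite /h1 in e *; lia.
move=> r; rewrite inE => /andP [_ ->]; have := hp r; lia.
Qed.

Local Open Scope ring_scope.

Lemma real_bound (R : realType) (k : nat) (eps : R) :
  (0 < k)%N -> 0 < eps -> eps < 1 ->
  let L := log2 (k%:R / eps) in
  0 <= L /\ 4 * k%:R < eps * 2 ^+ (Num.truncn L).+3.
Proof.
move=> k0 e0 e1 L.
have k1 : 1 <= k%:R :> R by rewrite ler1n.
have ke : 1 < k%:R / eps.
  rewrite ltr_pdivlMr // mul1r; apply: lt_le_trans e1 k1.
have ke0 : 0 < k%:R / eps by apply: lt_trans ke.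
have l2 : 0 < ln (2 : R) by apply: ln_gt0; rewrite ltr1n.
have L0 : 0 <= L by rewrite /L /log2 divr_ge0 // ltW // ln_gt0.
split => //.
set n := Num.truncn L.
have hL : L < n.+1%:R by rewrite -truncn_le_nat.
have h2 : k%:R / eps < 2 ^+ n.+1.
  have hp1 : k%:R / eps \in Num.pos by rewrite posrE.
  have hp2 : (2 : R) ^+ n.+1 \in Num.pos by rewrite posrE exprn_gt0.
  rewrite -(ltr_ln hp1 hp2) lnXn // -[ln 2 *+ _]mulr_natr.
  by move: hL; rewrite /L /log2 ltr_pdivrMr // [_ * ln 2]mulrC.
rewrite (exprS 2 n.+2) (exprS 2 n.+1).
move: h2; rewrite ltr_pdivrMr //.
move: (2 ^+ n.+1) => X h2; lra.
Qed.

Theorem theorem4p3 (R : realType) :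
  exists C : R,
    forall (p k : nat) (eps : R) (g : 'Z_p),
      prime p -> (0 < k)%N -> 0 < eps -> eps < 1 ->
      exists (Rnd : finType) (P : protocol p k Rnd),
        error_at_most P (sum_equal g) eps /\
        total_comm_at_most P (k%:R * log2 (k%:R / eps) + C * k%:R).
Proof.
exists 3 => p k eps g pp k0 e0 e1.
have [L0 hb] := real_bound k0 e0 e1.
move: L0 hb; set L := log2 _; set n := Num.truncn L => L0 hb.
exists ('I_p.-1 : finType), (@proto p k n.+3 g); split.
  have p1 := prime_gt1 pp.
  split; first by rewrite card_ord; lia.
  move=> x; rewrite /error_prob card_ord.
  have hc := core n.+3 g x pp k0.
  set B := #|_| in hc *.
  have hm := leq_divM (k * p) (2 ^ n.+3).
  have hnat : (B * 2 ^ n.+3 <= 4 * k * p.-1)%N.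
    have : (p <= 2 * p.-1)%N by lia.
    move: hc hm; move: (2 ^ n.+3)%N => M; move: (k * p %/ M)%N => m hc hm hp.
    have h1 : (B * M <= 2 * m * M)%N by rewrite leq_mul2r hc orbT.
    have h2 : (k * p <= k * (2 * p.-1))%N by rewrite leq_mul2l hp orbT.
    lia.
  have q0 : 0 < (p.-1)%:R :> R by rewrite ltr0n; lia.
  rewrite ler_pdivrMr //.
  have : (B%:R * 2 ^+ n.+3 <= 4 * k%:R * (p.-1)%:R :> R).
    by rewrite -natrX -!natrM ler_nat.
  have X0 : 0 < (2 : R) ^+ n.+3 by rewrite exprn_gt0.
  move: hb X0; move: ((2 : R) ^+ n.+3) => X hb X0 h.
  have : 4 * k%:R * (p.-1)%:R <= eps * X * (p.-1)%:R by rewrite ler_pM2r // ltW.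
  move=> h'; have : B%:R * X <= eps * (p.-1)%:R * X by rewrite mulrAC; apply: le_trans h h'.
  by rewrite ler_pM2r.
move=> x r; rewrite /= (eq_bigr (fun=> n.+3)) => [|i _]; last by rewrite size_enc.
rewrite sum_nat_const card_ord natrM.
have : (n%:R <= L) by rewrite truncn_le.
move=> hn; rewrite -addn3 natrD; have hk : 0 <= k%:R :> R by [].
nra.
Qed.
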